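(* The set $\Sigma=\{m\in(0,\infty):\partial_\xi^3\theta(0;m)=0\}$ is discrete. Writing $\Sigma=\{m_k\}_{k\ge1}$ (in increasing order), there exist $K>0$ and $k_0\in\mathbb{Z}$ such that $m_k=(k+k_0+\tfrac12)\pi+O(k^{-1})$ for all $k\ge K$. Moreover, $$m_k^3\,\partial_\xi^5\theta(0;m_k)=(-1)^{k+k_0+1}\cdot 15+O(k^{-2})\qquad(k\to\infty),$$ so in particular $\partial_\xi^5\theta(0;m_k)\neq 0$ for all sufficiently large $k$.
   Context: $\omega(\xi;m)=\sqrt{m^2+\xi^2}$ and $\theta(\xi;m)=\arctan\!\Big(\frac{\xi\sin(\omega(\xi;m))}{\sqrt{m^2+\xi^2\cos^2(\omega(\xi;m))}}\Big)$ for $m>0$, $\xi\in\mathbb{R}$. *)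

(* Defs.v *)
From Stdlib Require Import Reals Lra.
From Coquelicot Require Import Coquelicot.
Open Scope R_scope.

Definition omega (xi m : R) : R := sqrt (m ^ 2 + xi ^ 2).

Definition theta (xi m : R) : R :=
  atan (xi * sin (omega xi m) / sqrt (m ^ 2 + xi ^ 2 * (cos (omega xi m)) ^ 2)).

(* n-th derivative in xi of theta(.;m), evaluated at xi = 0
   (theta(.;m) is smooth for m > 0, so Coquelicot's total Derive_n is the
   genuine derivative). *)
Definition dtheta0 (n : nat) (m : R) : R := Derive_n (fun xi => theta xi m) n 0.

Definition Sigma (m : R) : Prop := 0 < m /\ dtheta0 3 m = 0.

(* Main.v *)
Require Import Defs.
From Stdlib Require Import Reals Lra Lia ZArith.
From Coquelicot Require Import Coquelicot.
Open Scope R_scope.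
Inductive ex := X | P | N (z:Z) | Add (a b:ex) | Mul (a b:ex) | Opp (a:ex) | Inv (a:ex)
 | Sin (a:ex) | Cos (a:ex) | Sqrt (a:ex) | Atan (a:ex).

Fixpoint eval (x m : R) (e:ex) : R :=
  match e with
  | X => x | P => m | N z => IZR z
  | Add a b => eval x m a + eval x m b
  | Mul a b => eval x m a * eval x m b
  | Opp a => - eval x m a
  | Inv a => / eval x m a
  | Sin a => sin (eval x m a)
  | Cos a => cos (eval x m a)
  | Sqrt a => sqrt (eval x m a)
  | Atan a => atan (eval x m a)
  end.

Definition is0 e := match e with N z => Z.eqb z 0 | _ => false end.
Definition is1 e := match e with N z => Z.eqb z 1 | _ => false end.

Definition mul a b :=
  if orb (is0 a) (is0 b) then N 0 else if is1 a then b else if is1 b then a else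
  match a, b with N x, N y => N (x*y) | _, _ => Mul a b end.
Definition add a b :=
  if is0 a then b else if is0 b then a else
  match a, b with N x, N y => N (x+y) | _, _ => Add a b end.
Definition opp a := match a with N z => N (- z) | Opp b => b | _ => Opp a end.

Fixpoint deriv e :=
  match e with
  | X => N 1 | P => N 0 | N _ => N 0
  | Add a b => add (deriv a) (deriv b)
  | Mul a b => add (mul (deriv a) b) (mul a (deriv b))
  | Opp a => opp (deriv a)
  | Inv a => opp (mul (deriv a) (mul (Inv a) (Inv a)))
  | Sin a => mul (deriv a) (Cos a)
  | Cos a => opp (mul (deriv a) (Sin a))
  | Sqrt a => mul (deriv a) (Inv (Mul (N 2) (Sqrt a)))
  | Atan a => mul (deriv a) (Inv (Add (N 1) (Mul a a)))
  end.

Definition inv1 a := if is1 a then N 1 else Inv a.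
Definition sin0 a := if is0 a then N 0 else Sin a.
Definition cos0 a := if is0 a then N 1 else Cos a.
Definition atan0 a := if is0 a then N 0 else Atan a.
Definition sqrtP a := match a with Mul P P => P | _ => Sqrt a end.

Fixpoint at0 e :=
  match e with
  | X => N 0 | P => P | N z => N z
  | Add a b => add (at0 a) (at0 b)
  | Mul a b => mul (at0 a) (at0 b)
  | Opp a => opp (at0 a)
  | Inv a => inv1 (at0 a)
  | Sin a => sin0 (at0 a)
  | Cos a => cos0 (at0 a)
  | Sqrt a => sqrtP (at0 a)
  | Atan a => atan0 (at0 a)
  end.


Fixpoint ok (x m : R) (e:ex) : Prop :=
  match e with
  | Add a b | Mul a b => ok x m a /\ ok x m b
  | Opp a | Sin a | Cos a | Atan a => ok x m a
  | Inv a => eval x m a <> 0 /\ ok x m a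
  | Sqrt a => 0 < eval x m a /\ ok x m a
  | _ => True
  end.

Lemma is0_spec x m a : is0 a = true -> eval x m a = 0.
Proof. destruct a; simpl; try discriminate. intros H; apply Z.eqb_eq in H; subst; reflexivity. Qed.
Lemma is1_spec x m a : is1 a = true -> eval x m a = 1.
Proof. destruct a; simpl; try discriminate. intros H; apply Z.eqb_eq in H; subst; reflexivity. Qed.

Lemma eval_mul x m a b : eval x m (mul a b) = eval x m a * eval x m b.
Proof.
  unfold mul. destruct (is0 a) eqn:H0; [rewrite (is0_spec x m a H0); simpl; ring|].
  destruct (is0 b) eqn:H1; [rewrite (is0_spec x m b H1); simpl; ring|]. simpl.
  destruct (is1 a) eqn:H2; [rewrite (is1_spec x m a H2); ring|].
  destruct (is1 b) eqn:H3; [rewrite (is1_spec x m b H3); ring|].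
  destruct a, b; simpl; try reflexivity. apply mult_IZR.
Qed.
Lemma eval_add x m a b : eval x m (add a b) = eval x m a + eval x m b.
Proof.
  unfold add. destruct (is0 a) eqn:H0; [rewrite (is0_spec x m a H0); simpl; ring|].
  destruct (is0 b) eqn:H1; [rewrite (is0_spec x m b H1); simpl; ring|].
  destruct a, b; simpl; try reflexivity. apply plus_IZR.
Qed.
Lemma eval_opp x m a : eval x m (opp a) = - eval x m a.
Proof. destruct a; simpl; try reflexivity. apply opp_IZR. ring. Qed.

Lemma ok_mul x m a b : ok x m a -> ok x m b -> ok x m (mul a b).
Proof.
  unfold mul. destruct (is0 a), (is0 b); simpl; auto.
  destruct (is1 a); auto. destruct (is1 b); auto. destruct a, b; simpl; auto.
Qed.
Lemma ok_add x m a b : ok x m a -> ok x m b -> ok x m (add a b).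
Proof.
  unfold add. destruct (is0 a); auto. destruct (is0 b); auto. destruct a, b; simpl; auto.
Qed.
Lemma ok_opp x m a : ok x m a -> ok x m (opp a).
Proof. destruct a; simpl; auto. Qed.

Lemma ok_deriv x m e : ok x m e -> ok x m (deriv e).
Proof.
  induction e; simpl; intros;
  repeat match goal with H : _ /\ _ |- _ => destruct H end;
  repeat (first [apply ok_add | apply ok_mul | apply ok_opp]); simpl; auto;
  repeat split; auto.
  - apply Rmult_integral_contrapositive; split; [lra|]. apply Rgt_not_eq, sqrt_lt_R0; auto.
  - nra.
Qed.

Lemma ide_eq (f : R -> R) x l l' : is_derive f x l -> l = l' -> is_derive f x l'.
Proof. intros; subst; auto. Qed.
Lemma dpl_eq f x l l' : derivable_pt_lim f x l -> l = l' -> derivable_pt_lim f x l'.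
Proof. intros; subst; auto. Qed.

Lemma deriv_correct x m e : ok x m e -> is_derive (fun y => eval y m e) x (eval x m (deriv e)).
Proof.
  induction e; simpl; intros Hok;
  repeat match goal with H : _ /\ _ |- _ => destruct H end;
  rewrite ?eval_add, ?eval_mul, ?eval_opp; simpl.
  - apply is_derive_Reals, derivable_pt_lim_id.
  - apply is_derive_Reals, derivable_pt_lim_const.
  - apply is_derive_Reals, derivable_pt_lim_const.
  - apply is_derive_Reals. apply (derivable_pt_lim_plus (fun y => eval y m e1) (fun y => eval y m e2)); apply is_derive_Reals; auto.
  - apply is_derive_Reals. eapply dpl_eq.
    apply (derivable_pt_lim_mult (fun y => eval y m e1) (fun y => eval y m e2)); apply is_derive_Reals; auto.
    reflexivity.
  - apply is_derive_Reals. apply (derivable_pt_lim_opp (fun y => eval y m e)); apply is_derive_Reals; auto.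
  - rewrite eval_mul; simpl. eapply ide_eq. apply (is_derive_inv (fun y => eval y m e)); auto. simpl. field. auto.
  - apply is_derive_Reals; eapply dpl_eq; [apply (derivable_pt_lim_comp (fun y => eval y m e) sin); [apply is_derive_Reals; auto | apply derivable_pt_lim_sin] | ring].
  - apply is_derive_Reals; eapply dpl_eq; [apply (derivable_pt_lim_comp (fun y => eval y m e) cos); [apply is_derive_Reals; auto | apply derivable_pt_lim_cos] | rewrite eval_mul; simpl; ring].
  - apply is_derive_Reals; eapply dpl_eq; [apply (derivable_pt_lim_comp (fun y => eval y m e) sqrt); [apply is_derive_Reals; auto | apply derivable_pt_lim_sqrt; auto] | ring].
  - apply is_derive_Reals; eapply dpl_eq; [apply (derivable_pt_lim_comp (fun y => eval y m e) atan); [apply is_derive_Reals; auto | apply derivable_pt_lim_atan] | replace (1 + eval x m e ^ 2) with (1 + eval x m e * eval x m e) by ring; ring].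
Qed.

Lemma ok_iter m e : (forall y, ok y m e) -> forall n y, ok y m (Nat.iter n deriv e).
Proof. intros H n; induction n; simpl; intros; auto. apply ok_deriv; auto. Qed.

Lemma Dn_eval m e : (forall y, ok y m e) -> forall n x, Derive_n (fun y => eval y m e) n x = eval x m (Nat.iter n deriv e).
Proof.
  intros H n; induction n; intros x; simpl; auto.
  rewrite (Derive_ext _ (fun y => eval y m (Nat.iter n deriv e))) by auto.
  apply is_derive_unique, deriv_correct, ok_iter; auto.
Qed.

Lemma at0_correct x m e : 0 <= m -> eval x m (at0 e) = eval 0 m e.
Proof.
  intros Hm; induction e; simpl; rewrite ?eval_add, ?eval_mul, ?eval_opp; try congruence.
  - unfold inv1; destruct (is1 (at0 e)) eqn:E; simpl; rewrite <- IHe; auto.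
    rewrite (is1_spec x m _ E); simpl; field.
  - unfold sin0; destruct (is0 (at0 e)) eqn:E; simpl; rewrite <- IHe; auto.
    rewrite (is0_spec x m _ E); simpl; rewrite sin_0; auto.
  - unfold cos0; destruct (is0 (at0 e)) eqn:E; simpl; rewrite <- IHe; auto.
    rewrite (is0_spec x m _ E); simpl; rewrite cos_0; auto.
  - unfold sqrtP; rewrite <- IHe; destruct (at0 e); simpl; auto.
    destruct e0_1; simpl; auto; destruct e0_2; simpl; auto. rewrite sqrt_square; auto.
  - unfold atan0; destruct (is0 (at0 e)) eqn:E; simpl; rewrite <- IHe; auto.
    rewrite (is0_spec x m _ E); simpl; rewrite atan_0; auto.
Qed.

Definition W := Sqrt (Add (Mul P P) (Mul X X)).
Definition th := Atan (Mul (Mul X (Sin W)) (Inv (Sqrt (Add (Mul P P) (Mul (Mul X X) (Mul (Cos W) (Cos W))))))).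

Lemma ok_th m y : 0 < m -> ok y m th.
Proof.
  intros Hm; simpl; repeat split; try nra.
  apply Rgt_not_eq, sqrt_lt_R0; nra.
Qed.

Lemma eval_th m y : eval y m th = theta y m.
Proof.
  unfold theta, omega, th, W; simpl. unfold Rdiv. rewrite !Rmult_1_r. reflexivity.
Qed.

Lemma dtheta0_E m n : 0 < m -> dtheta0 n m = eval 0 m (at0 (Nat.iter n deriv th)).
Proof.
  intros Hm. unfold dtheta0.
  rewrite (Derive_n_ext _ (fun y => eval y m th)) by (intros; rewrite eval_th; auto).
  rewrite Dn_eval by (intros; apply ok_th; auto).
  rewrite at0_correct; auto; lra.
Qed.

Definition E3 := Eval vm_compute in at0 (Nat.iter 3 deriv th).
Definition E5 := Eval vm_compute in at0 (Nat.iter 5 deriv th).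

Lemma dtheta3 m : 0 < m -> dtheta0 3 m = (3*m*cos m - sin m * (3 * cos m ^2 + 2 * sin m ^ 2)) / m^3.
Proof. intros. rewrite dtheta0_E by auto. change (at0 (Nat.iter 3 deriv th)) with E3. cbv [E3 eval]. field. lra. Qed.
Lemma dtheta5 m : 0 < m -> dtheta0 5 m = - 15 * sin m / m^3 - (15 * cos m + 30 * cos m ^3)/m^4 + (45 * sin m * cos m ^4 + 60 * sin m ^3 * cos m ^2 + 24 * sin m ^5)/m^5.
Proof. intros. rewrite dtheta0_E by auto. replace (at0 (Nat.iter 5 deriv th)) with E5 by (vm_compute; reflexivity). cbv [E5 eval]. field. lra. Qed.
Definition phi a t := 3*(a+t)*cos t - 3*sin t + sin t ^ 3.
Definition hh m := 3*m*cos m - sin m * (3 * cos m ^2 + 2 * sin m ^ 2).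

Lemma sgn_cases k : (-1)^k = 1 \/ (-1)^k = -1.
Proof. induction k; simpl; [left; auto|]. destruct IHk as [-> | ->]; [right|left]; ring. Qed.

Lemma sin_shiftk k t : sin (INR k * PI + t) = (-1)^k * sin t.
Proof.
  induction k; [simpl; rewrite Rmult_0_l, Rplus_0_l; ring|].
  rewrite S_INR. replace ((INR k + 1) * PI + t) with ((INR k * PI + t) + PI) by ring.
  rewrite neg_sin, IHk; simpl; ring.
Qed.
Lemma cos_shiftk k t : cos (INR k * PI + t) = (-1)^k * cos t.
Proof.
  induction k; [simpl; rewrite Rmult_0_l, Rplus_0_l; ring|].
  rewrite S_INR. replace ((INR k + 1) * PI + t) with ((INR k * PI + t) + PI) by ring.
  rewrite neg_cos, IHk; simpl; ring.
Qed.

Lemma sc1 t : sin t ^ 2 + cos t ^ 2 = 1.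
Proof. rewrite <- (sin2_cos2 t); unfold Rsqr; ring. Qed.

Lemma hh_shift k t : hh (INR k * PI + t) = (-1)^k * phi (INR k * PI) t.
Proof.
  unfold hh, phi. rewrite sin_shiftk, cos_shiftk. pose proof (sc1 t) as H.
  destruct (sgn_cases k) as [-> | ->]; apply Rminus_diag_uniq.
  - replace (_ - _) with (-3*sin t*(sin t^2+cos t^2-1)) by ring. rewrite H; ring.
  - replace (_ - _) with (3*sin t*(sin t^2+cos t^2-1)) by ring. rewrite H; ring.
Qed.

Definition dphi a t := 3*sin t*(sin t * cos t - (a+t)).
Lemma phi_deriv a t : derivable_pt_lim (phi a) t (dphi a t).
Proof. apply is_derive_Reals. unfold phi, dphi. auto_derive; auto. ring. Qed.

Lemma phi_cont a : continuity (fun t => - phi a t).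
Proof.
  intros x. apply derivable_continuous_pt.
  exists (- dphi a x). apply (derivable_pt_lim_opp (phi a)), phi_deriv.
Qed.

Lemma phi_decr a u v : 0 <= a -> 0 <= u -> u < v -> v <= PI -> phi a v < phi a u.
Proof.
  intros Ha Hu Huv Hv.
  destruct (MVT_cor2 (phi a) (dphi a) u v Huv) as [c [Hc1 Hc2]].
  { intros; apply phi_deriv. }
  assert (dphi a c < 0).
  { unfold dphi. assert (0 < sin c) by (apply sin_gt_0; lra).
    pose proof (sin_lt_x c ltac:(lra)). pose proof (COS_bound c).
    assert (sin c * cos c <= sin c) by nra.
    assert (sin c * cos c - (a+c) < 0) by lra.
    assert (0 < 3 * sin c) by lra.
    pose proof (Rmult_lt_compat_l (3 * sin c) _ _ H4 H3). unfold dphi; lra. }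
  nra.
Qed.

Lemma phi_0 a : phi a 0 = 3*a.
Proof. unfold phi; rewrite sin_0, cos_0; ring. Qed.
Lemma phi_PI2 a : phi a (PI/2) = -2.
Proof. unfold phi; rewrite sin_PI2, cos_PI2; ring. Qed.

Lemma aS_pos j : 0 < INR (S j) * PI.
Proof. apply Rmult_lt_0_compat; [apply lt_0_INR; lia | apply PI_RGT_0]. Qed.

Lemma ivt_l j : (fun t => - phi (INR (S j) * PI) t) 0 < 0.
Proof. cbv beta. rewrite phi_0. pose proof (aS_pos j). lra. Qed.
Lemma ivt_r j : 0 < (fun t => - phi (INR (S j) * PI) t) (PI/2).
Proof. cbv beta. rewrite phi_PI2. lra. Qed.

Definition tk (k : nat) : R :=
  match k with
  | O => 0
  | S j => proj1_sig (IVT (fun t => - phi (INR (S j) * PI) t) 0 (PI/2) (phi_cont _) PI2_RGT_0 (ivt_l j) (ivt_r j))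
  end.

Lemma tk_spec k : (1 <= k)%nat -> 0 < tk k < PI/2 /\ phi (INR k * PI) (tk k) = 0.
Proof.
  intros Hk. destruct k as [|j]; [lia|]. unfold tk.
  destruct (IVT _ _ _ _ _ _ _) as [z [Hz1 Hz2]]; simpl.
  assert (E : phi (INR (S j) * PI) z = 0) by lra.
  split; auto. pose proof (aS_pos j).
  split.
  - destruct (Req_dec z 0) as [->|]; [rewrite phi_0 in E; lra | lra].
  - destruct (Req_dec z (PI/2)) as [->|]; [rewrite phi_PI2 in E; lra | lra].
Qed.

Lemma phi_uniq a t1 t2 : 0 <= a -> 0 <= t1 <= PI -> 0 <= t2 <= PI -> phi a t1 = 0 -> phi a t2 = 0 -> t1 = t2.
Proof.
  intros Ha H1 H2 E1 E2. destruct (Rtotal_order t1 t2) as [Hl|[He|Hg]]; auto.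
  - pose proof (phi_decr a t1 t2 Ha ltac:(lra) Hl ltac:(lra)); lra.
  - pose proof (phi_decr a t2 t1 Ha ltac:(lra) Hg ltac:(lra)); lra.
Qed.

Definition mk (k : nat) : R := INR k * PI + tk k.

Lemma floor_dec x : 0 < x -> exists k t, x = INR k * PI + t /\ 0 <= t < PI.
Proof.
  intros Hx. pose proof PI_RGT_0 as HP.
  destruct (base_Int_part (x / PI)) as [H1 H2].
  set (z := Int_part (x / PI)) in *.
  assert (0 < x / PI) by (apply Rdiv_lt_0_compat; auto).
  assert (Hz0 : (-1 < z)%Z) by (apply lt_IZR; simpl; lra).
  exists (Z.to_nat z), (x - INR (Z.to_nat z) * PI).
  rewrite INR_IZR_INZ, Z2Nat.id by lia. split; [ring|].
  assert (IZR z * PI <= x). { apply (Rmult_le_compat_r PI) in H1; [|lra]. field_simplify in H1; lra. }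
  assert (x < IZR z * PI + PI). { assert (x / PI < IZR z + 1) by lra.
    apply (Rmult_lt_compat_r PI) in H3; auto. field_simplify in H3; lra. }
  lra.
Qed.


Lemma Sigma_char x : (0 < x /\ hh x = 0) <-> exists k, (1 <= k)%nat /\ x = mk k.
Proof.
  split.
  - intros [Hx Hh]. destruct (floor_dec x Hx) as [k [t [-> Ht]]].
    rewrite hh_shift in Hh.
    assert (E : phi (INR k * PI) t = 0).
    { apply Rmult_integral in Hh. destruct Hh; auto. exfalso; revert H; apply pow_nonzero; lra. }
    destruct k as [|j].
    + exfalso. simpl in *. rewrite Rmult_0_l, Rplus_0_l in Hx.
      pose proof (phi_decr 0 0 t ltac:(lra) ltac:(lra) Hx ltac:(lra)). rewrite Rmult_0_l, phi_0 in *. lra.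
    + exists (S j); split; [lia|]. unfold mk. f_equal.
      destruct (tk_spec (S j) ltac:(lia)) as [Ht2 E2].
      apply (phi_uniq (INR (S j) * PI)); auto; try lra. pose proof (aS_pos j); lra.
  - intros [k [Hk ->]]. destruct (tk_spec k Hk) as [Ht E]. unfold mk. split.
    + pose proof (pos_INR k); pose proof PI_RGT_0; nra.
    + rewrite hh_shift, E; ring.
Qed.

Lemma sinlb d : 0 <= d <= PI -> d - d^3/6 <= sin d.
Proof. intros H. pose proof (sin_bound d 0 (proj1 H) (proj2 H)) as [H1 _].
 unfold sin_approx, sin_term in H1. simpl in H1. lra. Qed.

Lemma Sigma_iff' x : Sigma x <-> 0 < x /\ hh x = 0.
Proof.
  unfold Sigma. split; intros [Hx H]; split; auto.
  - rewrite dtheta3 in H by auto. unfold hh.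
    apply Rmult_integral in H as [H|H]; auto. exfalso.
    assert (/ x ^ 3 <> 0) by (apply Rinv_neq_0_compat, pow_nonzero; lra). auto.
  - rewrite dtheta3 by auto. unfold hh in H. rewrite H. unfold Rdiv; ring.
Qed.

Lemma mk_facts k : (1 <= k)%nat ->
  INR k * PI < mk k < INR k * PI + PI/2 /\ 0 < sin (tk k) <= 1 /\ 0 < cos (tk k) /\
  mk k * cos (tk k) <= 1 /\ INR k <= mk k /\ 1 <= INR k.
Proof.
  intros Hk. destruct (tk_spec k Hk) as [Ht E].
  assert (1 <= INR k) by (apply (le_INR 1); auto).
  pose proof PI2_3_2. pose proof PI_4.
  assert (0 < sin (tk k)) by (apply sin_gt_0; lra).
  assert (0 < cos (tk k)) by (apply cos_gt_0; lra).
  pose proof (SIN_bound (tk k)).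
  unfold mk; repeat split; try lra.
  - unfold phi in E. assert (0 < sin (tk k) ^ 3) by (apply pow_lt; lra). lra.
  - nra.
Qed.

Lemma mk5 k : (1 <= k)%nat ->
  mk k ^ 3 * dtheta0 5 (mk k) = (-1)^k * (-15 * sin (tk k) - (15 * cos (tk k) + 30 * cos (tk k) ^ 3) / mk k
     + (45 * sin (tk k) * cos (tk k) ^4 + 60 * sin (tk k) ^3 * cos (tk k) ^2 + 24 * sin (tk k) ^5) / mk k ^ 2).
Proof.
  intros Hk. destruct (mk_facts k Hk) as [H1 _]. pose proof (pos_INR k). pose proof PI_RGT_0.
  assert (Hx : 0 < mk k) by nra.
  rewrite dtheta5 by auto.
  replace (sin (mk k)) with ((-1)^k * sin (tk k)) by (unfold mk; rewrite sin_shiftk; auto).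
  replace (cos (mk k)) with ((-1)^k * cos (tk k)) by (unfold mk; rewrite cos_shiftk; auto).
  destruct (sgn_cases k) as [-> | ->]; field; lra.
Qed.

Lemma Qbound s c u : 0 < s <= 1 -> 0 < c -> c <= u -> u <= 1 -> s^2 + c^2 = 1 ->
  Rabs (15 * (1 - s) - (15 * c + 30 * c ^ 3) * u + (45 * s * c ^4 + 60 * s ^3 * c ^2 + 24 * s ^5) * u ^ 2) <= 189 * u^2.
Proof.
  intros Hs Hc Hcu Hu E.
  assert (A1 : 0 <= 1 - s <= u^2) by nra.
  assert (c^3 <= c) by nra.
  assert (0 < u) by lra.
  assert (c * u <= u * u) by (apply Rmult_le_compat_r; lra).
  assert (0 <= c^3) by (apply pow_le; lra).
  assert (c^3 * u <= c * u) by (apply Rmult_le_compat_r; lra).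
  assert (0 <= c * u) by (apply Rmult_le_pos; lra).
  assert (A2 : 0 <= (15 * c + 30 * c ^ 3) * u <= 45 * u^2).
  { replace ((15 * c + 30 * c ^ 3) * u) with (15 * (c*u) + 30 * (c^3*u)) by ring.
    replace (u^2) with (u*u) by ring. split; [|lra].
    assert (0 <= c^3*u) by (apply Rmult_le_pos; lra). lra. }
  assert (c^4 <= 1) by nra. assert (s^3 <= 1) by nra. assert (c^2 <= 1) by nra. assert (s^5 <= 1) by nra.
  assert (0 <= c^4) by nra. assert (0 <= s^3) by nra. assert (0 <= c^2) by nra. assert (0 <= s^5) by nra.
  assert (B : 0 <= 45 * s * c ^4 + 60 * s ^3 * c ^2 + 24 * s ^5 <= 129) by nra.
  assert (A3 : 0 <= (45 * s * c ^4 + 60 * s ^3 * c ^2 + 24 * s ^5) * u ^ 2 <= 129 * u^2) by nra.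
  apply Rabs_le; lra.
Qed.

Theorem lemma5p2 :
  (forall x, Sigma x -> exists eps, 0 < eps /\
       forall y, Sigma y -> Rabs (y - x) < eps -> y = x) /\
  exists mk : nat -> R,
    (forall k, (1 <= k)%nat -> mk k < mk (S k)) /\
    (forall x, Sigma x <-> exists k, (1 <= k)%nat /\ x = mk k) /\
    exists (K : R) (k0 : Z), 0 < K /\
      (exists C, forall k, (1 <= k)%nat -> K <= INR k ->
         Rabs (mk k - (IZR (Z.of_nat k + k0) + 1/2) * PI) <= C / INR k) /\
      (exists C N, forall k, (1 <= k)%nat -> (N <= k)%nat ->
         Rabs (mk k ^ 3 * dtheta0 5 (mk k)
               - powerRZ (-1) (Z.of_nat k + k0 + 1) * 15) <= C / (INR k) ^ 2) /\
      (exists N, forall k, (N <= k)%nat -> dtheta0 5 (mk k) <> 0).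
Proof.
  assert (SC : forall x, Sigma x <-> exists k, (1 <= k)%nat /\ x = mk k).
  { intros x. rewrite Sigma_iff'. apply Sigma_char. }
  pose proof PI2_3_2 as HPI. pose proof PI_4.
  assert (B5 : forall k, (1 <= k)%nat ->
     Rabs (mk k ^ 3 * dtheta0 5 (mk k) - powerRZ (-1) (Z.of_nat k + 0 + 1) * 15) <= 189 / INR k ^ 2).
  { intros k Hk. destruct (mk_facts k Hk) as [H1 [H2 [H3 [H4 [H5 H6]]]]].
    rewrite mk5 by auto.
    replace (Z.of_nat k + 0 + 1)%Z with (Z.of_nat (S k)) by lia.
    rewrite <- pow_powerRZ. change ((-1)^(S k)) with (-1 * (-1)^k).
    set (s := sin (tk k)) in *. set (c := cos (tk k)) in *. set (x := mk k) in *.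
    assert (Hx : 0 < x) by lra.
    set (u := / x).
    assert (Hcu : c <= u) by (unfold u; apply (Rmult_le_reg_l x); [lra|]; rewrite Rinv_r; lra).
    assert (Hu : u <= / INR k) by (unfold u; apply Rinv_le_contravar; lra).
    assert (Hu1 : u <= 1) by (assert (/ INR k <= 1) by (rewrite <- Rinv_1; apply Rinv_le_contravar; lra); lra).
    assert (E : s^2 + c^2 = 1) by apply sc1.
    replace ((-1) ^ k * (-15 * s - (15 * c + 30 * c ^ 3) / x + (45 * s * c ^ 4 + 60 * s ^ 3 * c ^ 2 + 24 * s ^ 5) / x ^ 2) - -1 * (-1) ^ k * 15)
      with ((-1)^k * (15 * (1 - s) - (15 * c + 30 * c ^ 3) * u + (45 * s * c ^4 + 60 * s ^3 * c ^2 + 24 * s ^5) * u ^ 2))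
      by (unfold u; field; lra).
    rewrite Rabs_mult, <- RPow_abs, Rabs_m1, pow1, Rmult_1_l.
    assert (0 < s <= 1) by lra.
    eapply Rle_trans; [apply Qbound; eauto; lra|].
    unfold Rdiv. replace (/ INR k ^ 2) with ((/ INR k)^2) by (field; lra).
    apply Rmult_le_compat_l; [lra|]. assert (0 <= u) by (unfold u; apply Rlt_le, Rinv_0_lt_compat; lra).
    apply pow_incr; lra. }
  split.
  - intros x Hx. exists (PI/2). split; [lra|]. intros y Hy Hxy.
    apply SC in Hx as [k [Hk ->]]. apply SC in Hy as [j [Hj ->]].
    destruct (mk_facts k Hk) as [H1 _]. destruct (mk_facts j Hj) as [H2 _].
    destruct (Nat.lt_trichotomy j k) as [Hl|[He|Hg]]; [exfalso| subst; auto| exfalso].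
    + assert (INR j + 1 <= INR k) by (rewrite <- S_INR; apply le_INR; lia).
      apply Rabs_def2 in Hxy. nra.
    + assert (INR k + 1 <= INR j) by (rewrite <- S_INR; apply le_INR; lia).
      apply Rabs_def2 in Hxy. nra.
  - exists mk. split; [|split; [exact SC|]].
    { intros k Hk. destruct (mk_facts k Hk) as [H1 _]. destruct (mk_facts (S k) ltac:(lia)) as [H2 _].
      rewrite S_INR in H2. lra. }
    exists 1, 0%Z. split; [lra|]. split; [|split].
    + exists 1. intros k Hk _. destruct (mk_facts k Hk) as [H1 [H2 [H3 [H4 [H5 H6]]]]].
      destruct (tk_spec k Hk) as [Ht _].
      rewrite Z.add_0_r, <- INR_IZR_INZ.
      replace (mk k - (INR k + 1/2) * PI) with (- (PI/2 - tk k)) by (unfold mk; field).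
      rewrite Rabs_Ropp, Rabs_right by lra.
      pose proof (sinlb (PI/2 - tk k) ltac:(lra)) as Hsd. rewrite sin_shift in Hsd.
      set (d := PI/2 - tk k) in *.
      assert (0 < d < 2) by (unfold d; lra).
      assert (d^3 <= 4 * d) by nra.
      assert (d <= 3 * cos (tk k)) by lra.
      assert (mk k * d <= mk k * (3 * cos (tk k))) by (apply Rmult_le_compat_l; lra).
      assert (mk k * (PI/2 - tk k) <= 3) by (fold d; lra).
      apply (Rmult_le_reg_l (INR k)); [lra|]. unfold Rdiv. rewrite <- Rmult_assoc, Rinv_r_simpl_m by lra.
      nra.
    + exists 189%R, 1%nat. intros k Hk _. apply B5; auto.
    + exists 4%nat. intros k Hk Hd. assert (Hk1 : (1 <= k)%nat) by lia.
      pose proof (B5 k Hk1) as B. rewrite Hd, Rmult_0_r, Rminus_0_l, Rabs_Ropp in B.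
      replace (Z.of_nat k + 0 + 1)%Z with (Z.of_nat (S k)) in B by lia.
      rewrite <- pow_powerRZ, Rabs_mult, <- RPow_abs, Rabs_m1, pow1, Rmult_1_l in B.
      assert (4 <= INR k) by (replace 4 with (INR 4) by (simpl; ring); apply le_INR; auto).
      assert (189 / INR k ^ 2 < 15).
      { apply (Rmult_lt_reg_r (INR k ^2)); [nra|]. unfold Rdiv. rewrite Rmult_assoc, Rinv_l by nra. nra. }
      rewrite Rabs_right in B by lra. lra.
Qed.
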